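(* Let $r\ge 0$, $t\ge 0$, $k\ge 0$ and $\ell\ge 1$ be integers, and let $H$ and $L$ be graphs such that $H$ has treewidth at most $t$ and $\Delta(L^r)\le k$. If a graph $G$ is an $r$-shallow minor of $H\boxtimes L\boxtimes K_\ell$, then $G$ is contained in $J\boxtimes L^{2r+1}\boxtimes K_{\ell(k+1)}$ for some graph $J$ with treewidth at most $\binom{2r+1+t}{t}-1$.
   Context: All graphs are finite, simple and undirected. A graph $G$ is contained in a graph $G'$ if $G$ is isomorphic to a subgraph of $G'$. The strong product $G_1\boxtimes G_2$ has vertex set $V(G_1)\times V(G_2)$, with distinct vertices $(a,v),(b,u)$ adjacent iff ($ab\in E(G_1)$ and $u=v$) or ($a=b$ and $uv\in E(G_2)$) or ($ab\in E(G_1)$ and $uv\in E(G_2)$); the strong product is associative. $K_\ell$ is the complete graph on $\ell$ vertices. For an integer $m\ge 0$, the $m$-th power $L^m$ of $L$ has vertex set $V(L)$ with distinct $u,v$ adjacent iff $\mathrm{dist}_L(u,v)\le m$. $\Delta$ denotes maximum degree. A model of a graph $G$ in a graph $G'$ is a map $\mu$ assigning to each $v\in V(G)$ a connected subgraph $\mu(v)$ of $G'$ such that the $\mu(v)$ are pairwise vertex-disjoint and for every edge $vw\in E(G)$ some edge of $G'$ joins a vertex of $\mu(v)$ to a vertex of $\mu(w)$. $G$ is an $r$-shallow minor of $G'$ if there is such a model in which every $\mu(v)$ has radius at most $r$ (i.e. contains a vertex at distance at most $r$ within $\mu(v)$ from all vertices of $\mu(v)$). *)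

(* Defs.v *)
From mathcomp Require Import all_boot.
Set Implicit Arguments. Unset Strict Implicit. Unset Printing Implicit Defensive.

Record sgraph := SGraph {
  svert :> finType;
  sadj : rel svert;
  sadj_sym : symmetric sadj;
  sadj_irr : irreflexive sadj }.

Fixpoint walkle (T : finType) (e : rel T) (m : nat) (u v : T) : bool :=
  match m with
  | 0 => u == v
  | m'.+1 => walkle e m' u v || [exists w, e u w && walkle e m' w v]
  end.

Lemma walkle_mono (T : finType) (e : rel T) m u v :
  walkle e m u v -> walkle e m.+1 u v.
Proof. by move=> h /=; rewrite h. Qed.

Lemma walkle_snoc (T : finType) (e : rel T) m u w v :
  walkle e m u w -> e w v -> walkle e m.+1 u v.
Proof.
elim: m u => [|m IH] u /=.
  move=> /eqP -> ewv; apply/orP; right; apply/existsP; exists v.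
  by rewrite ewv /=.
case/orP=> [h|/existsP [x /andP [eux hx]]] ewv.
  by have /= -> := IH _ h ewv.
apply/orP; right; apply/existsP; exists x; rewrite eux /=.
exact: IH hx ewv.
Qed.

Lemma walkle_sym (T : finType) (e : rel T) : symmetric e ->
  forall m u v, walkle e m u v -> walkle e m v u.
Proof.
move=> se; elim=> [|m IH] u v /=; first by rewrite eq_sym.
case/orP=> [h|/existsP [w /andP [euw hw]]].
  by rewrite IH.
apply: walkle_snoc (IH _ _ hw) _; by rewrite se.
Qed.

Definition sprod_rel (G1 G2 : sgraph) : rel (G1 * G2)%type :=
  fun x y =>
    [|| sadj x.1 y.1 && (x.2 == y.2),
        (x.1 == y.1) && sadj x.2 y.2
      | sadj x.1 y.1 && sadj x.2 y.2].

Lemma sprod_sym G1 G2 : symmetric (@sprod_rel G1 G2).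
Proof.
move=> [a v] [b u]; rewrite /sprod_rel /=.
by rewrite (@sadj_sym G1 a b) (@sadj_sym G2 v u) (eq_sym a b) (eq_sym v u).
Qed.

Lemma sprod_irr G1 G2 : irreflexive (@sprod_rel G1 G2).
Proof. by move=> [a v]; rewrite /sprod_rel /= (@sadj_irr G1 a) (@sadj_irr G2 v) !andbF. Qed.

Definition sprod (G1 G2 : sgraph) : sgraph :=
  SGraph (@sprod_sym G1 G2) (@sprod_irr G1 G2).

Definition Kn_rel (l : nat) : rel 'I_l := fun x y => x != y.
Lemma Kn_sym l : symmetric (@Kn_rel l).
Proof. by move=> x y; rewrite /Kn_rel eq_sym. Qed.
Lemma Kn_irr l : irreflexive (@Kn_rel l).
Proof. by move=> x; rewrite /Kn_rel eqxx. Qed.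
Definition Kn (l : nat) : sgraph := SGraph (@Kn_sym l) (@Kn_irr l).

Definition gpower_rel (L : sgraph) (m : nat) : rel L :=
  fun u v => (u != v) && walkle (@sadj L) m u v.
Lemma gpower_sym L m : symmetric (@gpower_rel L m).
Proof.
move=> u v; rewrite /gpower_rel eq_sym.
case: (v != u) => //=; apply/idP/idP; apply: walkle_sym; exact: sadj_sym.
Qed.
Lemma gpower_irr L m : irreflexive (@gpower_rel L m).
Proof. by move=> u; rewrite /gpower_rel eqxx. Qed.
Definition gpower (L : sgraph) (m : nat) : sgraph :=
  SGraph (@gpower_sym L m) (@gpower_irr L m).

Definition maxdeg_le (G : sgraph) (k : nat) : Prop :=
  forall v : G, #|[set u : G | sadj v u]| <= k.

Definition induced_rel (G : sgraph) (S : {set G}) : rel G :=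
  fun x y => [&& sadj x y, x \in S & y \in S].

Definition connected_set (G : sgraph) (S : {set G}) : Prop :=
  S != set0 /\ forall x y, x \in S -> y \in S -> connect (induced_rel S) x y.

Definition acyclic (T : sgraph) : Prop :=
  forall p : seq T, uniq p -> 3 <= size p -> ~~ cycle (@sadj T) p.
Definition is_tree (T : sgraph) : Prop :=
  connected_set [set: T] /\ acyclic T.

Definition tw_le (G : sgraph) (t : nat) : Prop :=
  exists (T : sgraph) (B : T -> {set G}),
    [/\ is_tree T,
        forall v : G, exists x : T, v \in B x,
        forall u v : G, sadj u v -> exists x : T, (u \in B x) && (v \in B x),
        forall v : G, connected_set [set x : T | v \in B x]
      & forall x : T, #|B x| <= t.+1].

Definition contained (G G' : sgraph) : Prop :=
  exists f : G -> G', injective f /\ forall x y, sadj x y -> sadj (f x) (f y).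

Definition is_model (G G' : sgraph) (mu : G -> {set G'}) : Prop :=
  [/\ forall v, connected_set (mu v),
      forall v w, v != w -> [disjoint mu v & mu w]
    & forall v w, sadj v w ->
        exists x y, [/\ x \in mu v, y \in mu w & sadj x y]].

Definition shallow_minor (r : nat) (G G' : sgraph) : Prop :=
  exists mu : G -> {set G'}, is_model mu /\
    forall v, exists2 c, c \in mu v &
      forall x, x \in mu v -> walkle (induced_rel (mu v)) r c x.

(* Main.v *)
Require Import Defs.
From mathcomp Require Import all_boot zify.
Set Implicit Arguments. Unset Strict Implicit. Unset Printing Implicit Defensive.

Section Walks.
Variable T : finType.

Lemma walkle_leq (e : rel T) m n u v : m <= n -> walkle e m u v -> walkle e n u v.
Proof.
move=> /subnK <-; elim: (n - m) => [|d IH] h //.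
by rewrite addSn; apply: walkle_mono; apply: IH.
Qed.

Lemma walkle_cat (e : rel T) m n u w v :
  walkle e m u w -> walkle e n w v -> walkle e (m + n) u v.
Proof.
elim: m u => [|m IH] u /=.
  by move=> /eqP -> h; rewrite add0n.
case/orP=> [h1|/existsP [x /andP [eux hx]]] h2.
  by rewrite ?addSn /=; rewrite (IH _ h1 h2).
rewrite ?addSn /=; apply/orP; right; apply/existsP; exists x.
by rewrite eux (IH _ hx h2).
Qed.

Lemma walkle_sub (e e' : rel T) m u v : (forall x y, e x y -> e' x y) ->
  walkle e m u v -> walkle e' m u v.
Proof.
move=> sub; elim: m u => [|m IH] u //=.
case/orP=> [h|/existsP [x /andP [eux hx]]]; first by rewrite IH.
by apply/orP; right; apply/existsP; exists x; rewrite sub // IH.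
Qed.

Lemma walkle_connect (e : rel T) m u v : walkle e m u v -> connect e u v.
Proof.
elim: m u => [|m IH] u /=; first by move=> /eqP ->.
case/orP=> [h|/existsP [x /andP [eux hx]]]; first exact: IH.
exact: connect_trans (connect1 eux) (IH _ hx).
Qed.

Lemma connect_walkle (e : rel T) u v : connect e u v -> exists m, walkle e m u v.
Proof.
case/connectP=> p hp0 hl0; elim: p u hp0 hl0 => [|x p IH] u /=.
  move=> _ ->; exists 0; exact: eqxx.
case/andP=> eux hp hl; have [m hm] := IH _ hp hl.
exists m.+1; rewrite /=; apply/orP; right; apply/existsP; exists x.
by rewrite eux.
Qed.

End Walks.

Lemma walkle_map (T T' : finType) (e : rel T) (e' : rel T') (f : T -> T') m u v :
  (forall x y, e x y -> f x = f y \/ e' (f x) (f y)) ->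
  walkle e m u v -> walkle e' m (f u) (f v).
Proof.
move=> hf; elim: m u => [|m IH] u /=; first by move=> /eqP ->.
case/orP=> [h|/existsP [x /andP [eux hx]]]; first by rewrite IH.
have := IH _ hx; case: (hf _ _ eux) => [->|ef]; first exact: walkle_mono.
by move=> h; apply/orP; right; apply/existsP; exists (f x); rewrite ef h.
Qed.

Lemma connect_map (T T' : finType) (e : rel T) (e' : rel T') (f : T -> T') u v :
  (forall x y, e x y -> f x = f y \/ e' (f x) (f y)) ->
  connect e u v -> connect e' (f u) (f v).
Proof.
move=> hf /connect_walkle [m hm]; exact: walkle_connect (walkle_map hf hm).
Qed.

Lemma pathF (T : Type) (e : rel T) (f : nat -> T) n :
  (forall i, i < n -> e (f i) (f i.+1)) -> path e (f 0) (map f (iota 1 n)).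
Proof.
elim: n f => [|n IH] f H //=.
rewrite H //= -[2]/(1 + 1) iotaDl -map_comp.
apply: (IH (fun i => f (1 + i))) => i hi; apply: H; lia.
Qed.

Lemma lastF (T : Type) (f : nat -> T) n : last (f 0) (map f (iota 1 n)) = f n.
Proof.
elim: n f => [|n IH] f //=.
rewrite -[2]/(1 + 1) iotaDl -map_comp.
exact: (IH (fun i => f (1 + i))).
Qed.

Section Root.
Variable T : sgraph.
Hypothesis Tconn : forall x y : T, connect (@sadj T) x y.
Hypothesis Tacyc : acyclic T.
Variable rho : T.

Lemma ex_dep x : exists m, walkle (@sadj T) m rho x.
Proof. exact: connect_walkle (Tconn rho x). Qed.

Definition dep x := ex_minn (ex_dep x).

Lemma dep_walk x : walkle (@sadj T) (dep x) rho x.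
Proof. by rewrite /dep; case: ex_minnP. Qed.

Lemma dep_min x m : walkle (@sadj T) m rho x -> dep x <= m.
Proof. by rewrite /dep; case: ex_minnP => n _ h /h. Qed.

Lemma dep_rho : dep rho = 0.
Proof. by apply/eqP; rewrite -leqn0 dep_min //= eqxx. Qed.

Lemma dep0 x : dep x = 0 -> x = rho.
Proof. by move=> h; have := dep_walk x; rewrite h /= => /eqP. Qed.

Lemma dep_adj x y : sadj x y -> dep y <= (dep x).+1.
Proof. by move=> h; apply: dep_min; apply: walkle_snoc (dep_walk x) h. Qed.

Lemma dep_down x : x != rho -> exists y, sadj x y && ((dep y).+1 == dep x).
Proof.
move=> nx; case E: (dep x) => [|m]; first by move: nx; rewrite (dep0 E) eqxx.
have := dep_walk x; rewrite E => /(walkle_sym (@sadj_sym T)) /=.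
case/orP=> [h|/existsP [w /andP [ew hw]]].
  by have := dep_min (walkle_sym (@sadj_sym T) h); rewrite E ltnn.
exists w; rewrite ew /=.
have h1 := dep_min (walkle_sym (@sadj_sym T) hw).
rewrite (@sadj_sym T) in ew; have := dep_adj ew.
rewrite E => h3; apply/eqP; lia.
Qed.

Definition par x := odflt rho [pick y | sadj x y && ((dep y).+1 == dep x)].

Lemma par_spec x : x != rho -> sadj x (par x) /\ (dep (par x)).+1 = dep x.
Proof.
move=> nx; rewrite /par; case: pickP => [y /andP [h1 /eqP h2]|] //=.
by have [y hy] := dep_down nx => /(_ y); rewrite hy.
Qed.

Lemma par_rho : par rho = rho.
Proof. by rewrite /par; case: pickP => [y /andP [_]|] //=; rewrite dep_rho. Qed.

Lemma dep_par x : dep (par x) = (dep x).-1.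
Proof.
case: (eqVneq x rho) => [->|nx]; first by rewrite par_rho dep_rho.
by have [_ <-] := par_spec nx.
Qed.

Definition up x i := iter i par x.

Lemma upS x i : up x i.+1 = par (up x i).
Proof. by []. Qed.

Lemma up_add x i j : up (up x i) j = up x (j + i).
Proof. by rewrite /up iterD. Qed.

Lemma dep_up x i : dep (up x i) = dep x - i.
Proof. elim: i => [|i IH]; first by rewrite subn0. by rewrite upS dep_par IH; lia. Qed.

Lemma up_dep x : up x (dep x) = rho.
Proof. by apply: dep0; rewrite dep_up subnn. Qed.

Lemma up_neq x i : i < dep x -> up x i != rho.
Proof. by move=> h; apply/eqP => E; have := dep_up x i; rewrite E dep_rho; lia. Qed.

Lemma adj_up x i : i < dep x -> sadj (up x i) (up x i.+1).
Proof. by move=> h; rewrite upS; case: (par_spec (up_neq h)). Qed.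

Lemma chain a b : a != b -> dep a = dep b ->
  exists p : seq T, [/\ uniq (a :: p), path (@sadj T) a p, last a p = b,
     2 <= size p & forall y, y \in a :: p -> dep y <= dep a].
Proof.
move=> nab eab.
have ex : exists i, up a i == up b i by exists (dep a); rewrite {2}eab !up_dep.
case: (ex_minnP ex) => i0 e0 m0.
have i0n : i0 <= dep a by apply: m0; rewrite {2}eab !up_dep.
have i0p : 0 < i0 by case: i0 e0 {m0 i0n} => //= /eqP E; rewrite E eqxx in nab.
move/eqP: e0 => e0.
pose h i := if i <= i0 then up a i else up b (i0.*2 - i).
have hi1 i : i < i0 -> h i = up a i by move=> lt; rewrite /h ltnW.
have hi2 i : i0 <= i -> h i = up b (i0.*2 - i).
  move=> le; rewrite /h; case: leqP => // le2.
  have -> : i = i0 by lia.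
  by rewrite e0; congr up; lia.
have h0 : h 0 = a by rewrite /h leq0n.
exists (map h (iota 1 i0.*2)); split.
- have -> : a :: map h (iota 1 i0.*2) = map h (iota 0 (i0.*2).+1) by rewrite /= h0.
  rewrite map_inj_in_uniq ?iota_uniq // => i j; rewrite !mem_iota !add0n => hi hj.
  case: (ltnP i i0) => li; case: (ltnP j i0) => lj.
  + rewrite !hi1 // => E; have := dep_up a i; rewrite E dep_up; lia.
  + rewrite hi1 // hi2 // => E; exfalso.
    have E2 : i = i0.*2 - j by have := dep_up a i; rewrite E dep_up -eab; lia.
    have : i0 <= i by apply: m0; rewrite E E2.
    lia.
  + rewrite hi2 // hi1 // => E; exfalso.
    have E2 : j = i0.*2 - i by have := dep_up a j; rewrite -E dep_up -eab; lia.
    have : i0 <= j by apply: m0; rewrite -E E2.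
    lia.
  + rewrite !hi2 // => E; have := dep_up b (i0.*2 - i); rewrite E dep_up; lia.
- rewrite -{1}h0; apply: pathF => i hi.
  case: (ltnP i i0) => li.
  + have -> : h i.+1 = up a i.+1 by rewrite /h li.
    by rewrite hi1 //; apply: adj_up; lia.
  + rewrite !hi2 //; last lia.
    have -> : i0.*2 - i = (i0.*2 - i.+1).+1 by lia.
    by rewrite sadj_sym; apply: adj_up; lia.
- by rewrite -{1}h0 lastF hi2 ?subnn //; lia.
- by rewrite size_map size_iota; lia.
- move=> y; rewrite -{1}h0 -map_cons => /mapP [i _ ->].
  by rewrite /h; case: ifP => _; rewrite dep_up ?eab; lia.
Qed.

Lemma no_flat x y : sadj x y -> dep x != dep y.
Proof.
move=> exy; apply/negP => /eqP E.
have nxy : x != y by apply/negP => /eqP E2; rewrite E2 sadj_irr in exy.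
have [p [up_ pp lp sp _]] := chain nxy E.
have sz : 3 <= size (x :: p) by rewrite /=; lia.
move: (Tacyc up_ sz) => /negP; apply.
by rewrite /= rcons_path pp lp sadj_sym.
Qed.

Lemma par_uniq x y : sadj x y -> (dep y).+1 = dep x -> y = par x.
Proof.
move=> exy E.
have nx : x != rho by apply/negP => /eqP E2; rewrite E2 dep_rho in E.
have [e2 E2] := par_spec nx.
apply/eqP; apply/negPn/negP => nyp.
have [p [up_ pp lp sp dp]] := chain nyp (etrans (succn_inj (etrans E (esym E2))) erefl).
have xn : x \notin y :: p by apply/negP => /dp; rewrite -ltnS E ltnn.
have u2 : uniq (x :: y :: p) by rewrite cons_uniq xn up_.
have sz : 3 <= size (x :: y :: p) by rewrite /=; lia.
move: (Tacyc u2 sz) => /negP; apply.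
by rewrite /= rcons_path exy pp lp sadj_sym e2.
Qed.

Lemma edge_char x y : sadj x y ->
  (x != rho /\ y = par x) \/ (y != rho /\ x = par y).
Proof.
move=> exy; have d1 := dep_adj exy; have d2 := dep_adj (y := x) (x := y).
rewrite sadj_sym in d2; have {d2} d2 := d2 exy; have d3 := no_flat exy.
case: (ltngtP (dep x) (dep y)) => c.
- right; split; first by apply/negP => /eqP E; rewrite E dep_rho in c.
  by apply: par_uniq; [rewrite sadj_sym | lia].
- left; split; first by apply/negP => /eqP E; rewrite E dep_rho in c.
  by apply: par_uniq => //; lia.
- by rewrite c eqxx in d3.
Qed.

End Root.

Section Sub.
Variable T : sgraph.
Hypothesis Tconn : forall x y : T, connect (@sadj T) x y.
Hypothesis Tacyc : acyclic T.
Variable rho : T.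

Local Notation dep := (dep Tconn rho).
Local Notation par := (par Tconn rho).
Local Notation up := (up Tconn rho).

Lemma up1 x : up x 1 = par x. Proof. by []. Qed.

Lemma upS' x i : up x i.+1 = up (par x) i.
Proof. by rewrite -up1 up_add addn1. Qed.

Lemma up_par_rho i : up rho i = rho.
Proof. by elim: i => // i IH; rewrite upS IH par_rho. Qed.

Lemma desc_closed (S : {set T}) u : u \in S -> (u = rho \/ par u \notin S) ->
  forall y, connect (induced_rel S) u y -> exists i, up y i = u.
Proof.
move=> uS hu y /connectP [p0 hp0 ->] {y}.
suff gen : forall p z, z \in S -> path (induced_rel S) z p ->
    (exists i, up z i = u) -> exists i, up (last z p) i = u.
  by apply: gen => //; exists 0.
elim=> [|w p IH] z zS /= hp [i hi]; first by exists i.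
case/andP: hp => /and3P [ezw _ wS] hp.
apply: (IH w) => //.
case: (@edge_char T Tconn Tacyc rho _ _ ezw) => [[nz wz]|[nw zw]].
- case: i hi => [|i] hi.
    exfalso; rewrite /= in hi; rewrite -hi in hu.
    by case: hu => [E|]; [rewrite E eqxx in nz | rewrite -wz wS].
  by exists i; rewrite -hi upS' wz.
- by exists i.+1; rewrite upS' -zw.
Qed.

Definition topS (S : {set T}) : T :=
  if [pick x in S] is Some x0 then [arg min_(x < x0 in S) dep x] else rho.

Section TopS.
Variable S : {set T}.
Hypothesis Sc : connected_set S.

Lemma topS_spec : topS S \in S /\ forall y, y \in S -> dep (topS S) <= dep y.
Proof.
rewrite /topS; case: pickP => [x0 x0S|].
  by case: arg_minnP.
by case: Sc => /set0Pn [x xS] _ /(_ x); rewrite xS.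
Qed.

Lemma topS_in : topS S \in S. Proof. by case: topS_spec. Qed.
Lemma topS_min y : y \in S -> dep (topS S) <= dep y.
Proof. by case: topS_spec => _; apply. Qed.

Lemma topS_root : topS S = rho \/ par (topS S) \notin S.
Proof.
case: (eqVneq (topS S) rho) => [|nr]; [by left|right].
apply/negP => /topS_min; have [_ <-] := par_spec Tconn nr; lia.
Qed.

Lemma topS_anc y : y \in S -> exists i, up y i = topS S.
Proof.
move=> yS; apply: (desc_closed topS_in topS_root).
by case: Sc => _; apply => //; exact: topS_in.
Qed.

Lemma anc_in y i j : y \in S -> up y i = topS S -> j <= i -> up y j \in S.
Proof.
move=> yS hi; elim: j => [|j IH] lj; first by [].
have IH' := IH (ltnW lj).
case: (eqVneq (up y j) rho) => [E|nr]; first by rewrite upS E par_rho -E.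
apply/negPn/negP => npar.
have cn : connect (induced_rel S) (up y j) (topS S).
  by case: Sc => _; apply => //; exact: topS_in.
have [k hk] := desc_closed IH' (or_intror npar) cn.
exfalso; move: hk; rewrite -hi up_add => E.
have d1 := dep_up Tconn rho y (k + i); have d2 := dep_up Tconn rho y j.
rewrite E in d1; have : j < dep y.
  case: (ltnP j (dep y)) => // le; move: nr; rewrite (@dep0 T Tconn rho (up y j)) ?eqxx //.
  by rewrite dep_up; lia.
lia.
Qed.

Lemma topS_anc_in y z : y \in S -> z \in S -> (exists k, up z k = y) ->
  (exists k, up y k = z) -> y = z.
Proof.
move=> yS zS [k hk] [m hm].
have := dep_up Tconn rho z k; have := dep_up Tconn rho y m.
rewrite hk hm; case: (eqVneq y z) => // nyz d1 d2; exfalso.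
have dz : dep z = dep y by lia.
case: m hm d1 => [|m] hm d1; first by rewrite /= in hm; rewrite hm eqxx in nyz.
case: k hk d2 => [|k] hk d2; first by rewrite /= in hk; rewrite hk eqxx in nyz.
have : dep y = 0 by lia.
move/(@dep0 T Tconn rho) => yr; have : dep z = 0 by lia.
move/(@dep0 T Tconn rho) => zr; by rewrite yr zr eqxx in nyz.
Qed.

End TopS.

Lemma anc_cmp x i j : i <= j -> up x j = up (up x i) (j - i).
Proof. by move=> h; rewrite up_add subnK. Qed.

End Sub.

Definition Fb s b m := \sum_(b - m <= i < b) 'C(s + i, i).

Lemma hockey s n : \sum_(0 <= i < n.+1) 'C(s + i, i) = 'C(s + n.+1, n).
Proof.
elim: n => [|n IH]; first by rewrite big_nat1 addn0 bin0 addn1 bin0.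
rewrite big_nat_recr //= IH.
have -> : s + n.+2 = (s + n.+1).+1 by lia.
rewrite binS addnC; congr (_ + _); congr binomial; lia.
Qed.

Lemma Fb_mono s b m m' : m <= m' -> Fb s b m <= Fb s b m'.
Proof.
move=> h; rewrite /Fb (@big_cat_nat _ _ _ (b - m) (b - m') b); [by rewrite leq_addl | lia | lia].
Qed.

Lemma Fb_step s b m : 0 < m -> m <= b.+1 ->
  Fb s b.+1 m = Fb s b m.-1 + 'C(s + b, b).
Proof.
move=> h1 h2; rewrite /Fb big_nat_recr /=; last lia.
by have -> : b.+1 - m = b - m.-1 by lia.
Qed.

Lemma Fb_hock s b : (Fb s b.+1 b).+1 = 'C(s.+1 + b, b).
Proof.
have -> : s.+1 + b = s + b.+1 by lia.
rewrite /Fb -hockey (@big_cat_nat _ _ _ 1 0 b.+1) //= big_nat1 bin0.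
by have -> : b.+1 - b = 1 by lia.
Qed.

Lemma Fb_full s t : Fb s t.+1 t.+1 = 'C(s + t.+1, t).
Proof. by rewrite /Fb subnn hockey. Qed.

Section HD.
Variables (H T : sgraph).
Hypothesis Tconn : forall x y : T, connect (@sadj T) x y.
Hypothesis Tacyc : acyclic T.
Variable rho : T.
Variable B : T -> {set H}.
Hypothesis Bconn : forall v : H, connected_set [set x | v \in B x].

Local Notation dep := (dep Tconn rho).
Local Notation par := (par Tconn rho).
Local Notation up := (up Tconn rho).

Definition tp (h : H) := topS Tconn rho [set x | h \in B x].

Lemma tp_in h : h \in B (tp h).
Proof. by have := topS_in Tconn rho (Bconn h); rewrite inE. Qed.

Lemma tp_anc h y : h \in B y -> exists i, up y i = tp h.
Proof. by move=> hy; apply: (topS_anc Tconn Tacyc rho (Bconn h)); rewrite inE. Qed.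

Lemma dep_rho' x : dep x = 0 -> x = rho.
Proof. exact: (@dep0 T Tconn rho). Qed.

Lemma tp_below h y x : h \in B y -> (exists k, up y k = x) ->
  dep (tp h) <= dep x -> h \in B x.
Proof.
move=> hy [k hk] hd; have [m hm] := tp_anc hy.
case: (leqP k m) => km.
  have := @anc_in T Tconn Tacyc rho _ (Bconn h) y m k; rewrite !inE hk; apply => //.
have d1 := dep_up Tconn rho y m; have d2 := dep_up Tconn rho y k.
rewrite hm in d1; rewrite hk in d2.
have xr : x = rho by apply: dep_rho'; lia.
have tr : tp h = rho by apply: dep_rho'; lia.
by rewrite xr -tr tp_in.
Qed.

Lemma anc_dep p i j : dep (up p i) <= dep (up p j) -> exists k, up (up p j) k = up p i.
Proof.
move=> h; case: (leqP j i) => ji; first by exists (i - j); rewrite up_add subnK.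
have d1 := dep_up Tconn rho p i; have d2 := dep_up Tconn rho p j.
have e1 : dep (up p i) = 0 by lia.
have e2 : dep (up p j) = 0 by lia.
by exists 0; rewrite /= (dep_rho' e1) (dep_rho' e2).
Qed.

Definition key (h : H) := dep (tp h) * #|H| + enum_rank h.

Lemma key_le a b : key a <= key b -> dep (tp a) <= dep (tp b).
Proof.
rewrite /key => h; rewrite leqNgt; apply/negP => lt.
have ha : (enum_rank a : nat) < #|H| := ltn_ord _.
have hb : (enum_rank b : nat) < #|H| := ltn_ord _.
have := leq_mul lt (leqnn #|H|); rewrite mulSn.
move: h ha hb; move: (dep (tp a) * #|H|) (dep (tp b) * #|H|) => X Y.
move: (nat_of_ord (enum_rank a)) (nat_of_ord (enum_rank b)) => ea eb.
move: #|H| => n; lia.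
Qed.

Lemma key_inj : injective key.
Proof.
move=> a b E; have d1 : dep (tp a) = dep (tp b).
  by apply/eqP; rewrite eqn_leq !key_le // E.
move: E; rewrite /key d1 => /addnI /val_inj; exact: enum_rank_inj.
Qed.

Definition plus (a b : H) := (a != b) && [exists x, (a \in B x) && (b \in B x)].

Lemma plus_sym a b : plus a b = plus b a.
Proof.
rewrite /plus eq_sym; congr (_ && _); apply/existsP/existsP => [] [x hx];
by exists x; rewrite andbC.
Qed.

Definition allowed th := [set u : H | th <= key u].

Definition Nm th u := [set w | [&& plus w u, key w < key u & th <= key w]].

Lemma Nm_bag th u w : w \in Nm th u -> w \in B (tp u).
Proof.
rewrite inE => /and3P [/andP [_ /existsP [x /andP [wx ux]]] kl _].
apply: (tp_below wx (tp_anc ux)); apply: key_le; exact: ltnW.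
Qed.

Fixpoint dreach th s h a : bool :=
  match s with
  | 0 => h == a
  | s'.+1 => (h == a) || [exists w, (w \in Nm th h) && dreach th s' w a]
  end.

Lemma dreach_mono th s h a : dreach th s h a -> dreach th s.+1 h a.
Proof.
elim: s h => [|s IH] h hr; first by rewrite /= in hr; rewrite /= hr.
move: hr => /orP [ha|/existsP [w /andP [wN hw]]]; first by apply/orP; left.
by apply/orP; right; apply/existsP; exists w; rewrite wN; apply: IH.
Qed.

Lemma dreach_key th s h a : dreach th s h a -> key a <= key h.
Proof.
elim: s h => [|s IH] h /=; first by move=> /eqP ->.
case/orP=> [/eqP->//|/existsP [w /andP [wN hw]]].
by move: wN; rewrite inE => /and3P [_ kl _]; apply: leq_trans (IH _ hw) (ltnW kl).
Qed.

Definition D th s (K : {set H}) := [set a | [exists h in K, dreach th s h a]].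

Lemma D0 th s : D th s set0 = set0.
Proof. by apply/setP => a; rewrite !inE; apply/existsP => [] [h]; rewrite inE. Qed.

Lemma Dsing0 th z : D th 0 [set z] = [set z].
Proof.
apply/setP => a; rewrite !inE; apply/existsP/idP => [[h /andP [/set1P -> /eqP ->]]|/eqP ->].
  by [].
by exists z; rewrite !inE /= eqxx.
Qed.

Lemma DsingS th s z : D th s.+1 [set z] \subset z |: D th s (Nm th z).
Proof.
apply/subsetP => a; rewrite !inE => /existsP [h /andP [/set1P -> /=]].
case/orP=> [/eqP ->|/existsP [w /andP [wN hw]]]; first by rewrite eqxx.
by apply/orP; right; apply/existsP; exists w; rewrite wN.
Qed.

Section Decomp.
Variables (th : nat) (p : T) (K : {set H}) (z : H).
Hypothesis zK : z \in K.
Hypothesis zmin : forall u, u \in K -> key z <= key u.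
Hypothesis KB : K \subset B p :&: allowed th.

Lemma zBp : z \in B p.
Proof. by have := subsetP KB z zK; rewrite !inE => /andP []. Qed.

Lemma claim s h a : (exists i, up p i = tp h) -> th <= key h -> key z <= key h ->
  dreach th s h a -> dreach (key z).+1 s h a || dreach th s z a.
Proof.
elim: s h => [|s IH] h hanc hth hz /=.
  by case: (eqVneq h z) => [->|nhz] ->; rewrite ?orbT.
case/orP=> [ha|/existsP [w /andP [wN hw]]].
  by rewrite ha.
case: (eqVneq h z) => [E|nhz].
  by rewrite -E; apply/orP; right; apply/orP; right; apply/existsP; exists w; rewrite wN.
have khz : key z < key h.
  by rewrite ltn_neqAle hz andbT; apply/negP => /eqP /key_inj E; rewrite E eqxx in nhz.
move: (wN); rewrite inE => /and3P [pwh kwh thw].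
case: (ltngtP (key z) (key w)) => c.
- have wanc : exists i, up p i = tp w.
    case: hanc => i hi; have [m hm] := tp_anc (Nm_bag wN).
    by exists (m + i); rewrite -up_add hi hm.
  case/orP: (IH w wanc thw (ltnW c) hw) => h2.
    apply/orP; left; apply/orP; right; apply/existsP; exists w; rewrite h2 andbT.
    by rewrite inE pwh kwh.
  by apply/orP; right; apply: dreach_mono.
- apply/orP; right; apply/orP; right; apply/existsP; exists w; rewrite hw andbT.
  rewrite inE c thw andbT.
  have nwz : w != z by apply/negP => /eqP E; rewrite E ltnn in c.
  rewrite /plus nwz /= andbT; apply/existsP; exists (tp z); rewrite tp_in andbT.
  have wB := Nm_bag wN.
  have [iz hiz] := tp_anc zBp; case: hanc => ih hih.
  have : exists k, up (tp h) k = tp z.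
    rewrite -hiz -hih; apply: anc_dep; rewrite hiz hih; apply: key_le; exact: ltnW.
  move=> hk; apply: (tp_below wB hk); apply: key_le; exact: ltnW.
- have E : w = z by apply: key_inj; rewrite c.
  by rewrite E in hw; apply/orP; right; apply: dreach_mono.
Qed.

Lemma decomp s : D th s K \subset D (key z).+1 s (K :\ z) :|: D th s [set z].
Proof.
apply/subsetP => a; rewrite !inE => /existsP [h /andP [hK hr]].
have := subsetP KB h hK; rewrite !inE => /andP [hB hth].
case: (eqVneq h z) => [E|nhz].
  by apply/orP; right; apply/existsP; exists z; rewrite inE eqxx -E hr.
case/orP: (claim (tp_anc hB) hth (zmin hK) hr) => h2.
  by apply/orP; left; apply/existsP; exists h; rewrite !inE nhz hK h2.
by apply/orP; right; apply/existsP; exists z; rewrite inE eqxx h2.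
Qed.

End Decomp.

Lemma zin p z u y : z \in B p -> u \in B y -> key z <= key u ->
  (exists i, up p i = y) -> z \in B y.
Proof.
move=> zB uB kzu hy; apply: (tp_below zB hy).
apply: leq_trans (key_le kzu) _.
have [m hm] := tp_anc uB; rewrite -hm dep_up; exact: leq_subr.
Qed.

Lemma ML_step b s th p (K : {set H}) z :
  (forall s th p (K : {set H}),
    (forall i, #|B (up p i) :&: allowed th| <= b) ->
    K \subset B p :&: allowed th -> #|D th s K| <= Fb s b #|K|) ->
  (forall i, #|B (up p i) :&: allowed th| <= b.+1) ->
  K \subset B p :&: allowed th ->
  z \in K -> (forall u, u \in K -> key z <= key u) ->
  #|D th s [set z]| <= 'C(s + b, b) ->
  #|D th s K| <= Fb s b.+1 #|K|.
Proof.
move=> IHb hB hK zK zmin hs.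
have zB : z \in B p by have := subsetP hK z zK; rewrite !inE => /andP [].
have zth : th <= key z by have := subsetP hK z zK; rewrite !inE => /andP [].
have Kb : #|K| <= b.+1 by apply: leq_trans (subset_leq_card hK) (hB 0).
have K0 : 0 < #|K| by rewrite card_gt0; apply/set0Pn; exists z.
rewrite Fb_step //.
apply: leq_trans (subset_leq_card (decomp zK zmin hK s)) _.
apply: leq_trans (leq_card_setU _ _) _; apply: leq_add => //.
have -> : #|K|.-1 = #|K :\ z| by rewrite (cardsD1 z K) zK.
apply: (IHb s (key z).+1 p).
- move=> i; case: (eqVneq (B (up p i) :&: allowed (key z).+1) set0) => [->|/set0Pn [u]];
    first by rewrite cards0.
  rewrite !inE => /andP [uB ku].
  have zy : z \in B (up p i) by apply: (zin zB uB (ltnW ku)); exists i.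
  have := hB i; rewrite (cardsD1 z (B (up p i) :&: allowed th)) !inE zy zth /=.
  rewrite add1n ltnS => h; apply: leq_trans h; apply: subset_leq_card; apply/subsetP => w.
  rewrite !inE => /andP [wB kw]; rewrite wB (leq_trans zth (ltnW kw)) !andbT.
  by apply/negP => /eqP E; rewrite E ltnn in kw.
- apply/subsetP => u; rewrite !inE => /andP [nuz uK].
  have := subsetP hK u uK; rewrite !inE => /andP [-> _] /=.
  rewrite ltn_neqAle zmin // andbT; apply/negP => /eqP /key_inj E.
  by rewrite E eqxx in nuz.
Qed.

Lemma ML b : forall s th p (K : {set H}),
  (forall i, #|B (up p i) :&: allowed th| <= b) ->
  K \subset B p :&: allowed th ->
  #|D th s K| <= Fb s b #|K|.
Proof.
elim: b => [|b IHb] s th p K hB hK.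
  have : #|K| <= 0 by apply: leq_trans (subset_leq_card hK) (hB 0).
  by rewrite leqn0 cards_eq0 => /eqP ->; rewrite D0 cards0.
case: (eqVneq K set0) => [->|/set0Pn [z0 z0K]]; first by rewrite D0 cards0.
pose z := [arg min_(u < z0 in K) key u].
have [zK zmin] : z \in K /\ forall u, u \in K -> key z <= key u.
  by rewrite /z; case: arg_minnP.
apply: (ML_step IHb hB hK zK zmin).
elim: s th p K hB hK z0 z0K z zK zmin => [|s IHs] th p K hB hK z0 z0K z zK zmin.
  by rewrite Dsing0 cards1 add0n binn.
have zB : z \in B p by have := subsetP hK z zK; rewrite !inE => /andP [].
have zth : th <= key z by have := subsetP hK z zK; rewrite !inE => /andP [].
have [iz hiz] := tp_anc zB.
apply: leq_trans (subset_leq_card (DsingS th s z)) _.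
rewrite cardsU1; set N := Nm th z.
have hBN : forall i, #|B (up (tp z) i) :&: allowed th| <= b.+1.
  by move=> i; rewrite -hiz up_add.
have hKN : N \subset B (tp z) :&: allowed th.
  apply/subsetP => w wN; rewrite !inE (Nm_bag wN) /=.
  by move: wN; rewrite inE => /and3P [].
have Nb : #|N| <= b.
  have zN : z \notin N by rewrite inE ltnn andbF.
  have : #|z |: N| <= b.+1.
    apply: leq_trans (hB iz); apply: subset_leq_card; apply/subsetP => w.
    rewrite hiz in_setU1 => /orP [/eqP ->|wN]; first by rewrite !inE tp_in zth.
    by have := subsetP hKN w wN; rewrite !inE.
  by rewrite cardsU1 zN.
have IH1 : #|D th s N| <= Fb s b.+1 #|N|.
  case: (eqVneq N set0) => [->|/set0Pn [w0 w0N]]; first by rewrite D0 cards0.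
  pose w := [arg min_(u < w0 in N) key u].
  have [wN wmin] : w \in N /\ forall u, u \in N -> key w <= key u.
    by rewrite /w; case: arg_minnP.
  apply: (ML_step IHb hBN hKN wN wmin).
  exact: (IHs th (tp z) N hBN hKN w0 w0N w wN wmin).
have := Fb_hock s b => E.
have : (Fb s b.+1 #|N|).+1 <= 'C(s.+1 + b, b) by rewrite -E ltnS Fb_mono.
move=> h2; apply: leq_trans _ h2; case: (z \in D th s N) => /=; last by rewrite add1n ltnS.
by rewrite add0n; apply: leq_trans IH1 _.
Qed.

Definition wrel (a : H) : rel H :=
  fun x y => [&& plus x y, key a <= key x & key a <= key y].

Lemma walkle_refl (U : finType) (e : rel U) s x : walkle e s x x.
Proof. by apply: (walkle_leq (m := 0)) => //=. Qed.

Lemma dreach_walk th s h a : dreach th s h a -> walkle (wrel a) s h a.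
Proof.
elim: s h => [|s IH] h //= hr.
case/orP: hr => [/eqP ->|/existsP [w /andP [wN hw]]].
  by rewrite walkle_refl.
apply/orP; right; apply/existsP; exists w; rewrite IH // andbT.
move: wN; rewrite inE => /and3P [pw kw _].
rewrite /wrel plus_sym pw (dreach_key hw) /=.
by rewrite andbT; exact: leq_trans (dreach_key hw) (ltnW kw).
Qed.

Lemma Nm_plus th th' u w1 w2 : w1 \in Nm th u -> w2 \in Nm th' u -> w1 != w2 ->
  plus w1 w2.
Proof.
move=> h1 h2 n12; rewrite /plus n12 /=; apply/existsP; exists (tp u).
by rewrite (Nm_bag h1) (Nm_bag h2).
Qed.

Lemma shortcut s : forall h a, key a <= key h -> walkle (wrel a) s h a -> dreach 0 s h a.
Proof.
elim: s => [|s IH] h a kh; first exact: id.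
move=> /orP [hw|/existsP [p1 /andP [/and3P [pl ka1 ka2] hw]]].
  exact: dreach_mono (IH _ _ kh hw).
have r1 := IH _ _ ka2 hw.
have np : p1 != h by rewrite plus_sym in pl; case/andP: pl.
case: (ltngtP (key p1) (key h)) => c.
- apply/orP; right; apply/existsP; exists p1; apply/andP; split; last exact: r1.
  by rewrite inE plus_sym pl c leq0n.
- case: s IH r1 hw => [|s] IH r1 hw.
    by move: r1 => /= /eqP E; move: c; rewrite E ltnNge kh.
  case/orP: r1 => [/eqP E|/existsP [q1 /andP [q1N hq]]].
    by move: c; rewrite E ltnNge kh.
  have hN : h \in Nm 0 p1 by rewrite inE pl c leq0n.
  case: (eqVneq h q1) => [E|nhq].
    by apply: dreach_mono; apply: dreach_mono; rewrite E.
  apply: dreach_mono; apply: IH => //=.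
  apply/orP; right; apply/existsP; exists q1; apply/andP; split.
    by rewrite /wrel (Nm_plus hN q1N nhq) kh (dreach_key hq).
  exact: dreach_walk hq.
- by move/key_inj: c => E; rewrite E eqxx in np.
Qed.

End HD.

Lemma sprod_proj (A C : sgraph) (x y : sprod A C) : sadj x y ->
  (x.1 = y.1 \/ sadj x.1 y.1) /\ (x.2 = y.2 \/ sadj x.2 y.2).
Proof.
rewrite /= /sprod_rel.
case/or3P => [/andP [h1 /eqP h2]|/andP [/eqP h1 h2]|/andP [h1 h2]]; split; by [left|right].
Qed.

Lemma sprod_adj (A C : sgraph) (x y : sprod A C) : x != y ->
  (x.1 = y.1 \/ sadj x.1 y.1) -> (x.2 = y.2 \/ sadj x.2 y.2) -> sadj x y.
Proof.
case: x y => [a c] [a2 c2] nxy /= [E1|h1] [E2|h2]; rewrite /= /sprod_rel /=.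
- by rewrite E1 E2 eqxx in nxy.
- by rewrite E1 eqxx h2 orbT.
- by rewrite E2 eqxx h1.
- by rewrite h1 h2 !orbT.
Qed.

Lemma induced_sym (X : sgraph) (S : {set X}) : symmetric (induced_rel S).
Proof.
move=> x y; rewrite /induced_rel (sadj_sym x y).
by case: (x \in S); case: (y \in S); rewrite ?andbT ?andbF.
Qed.

Lemma induced_sub (X : sgraph) (S : {set X}) x y : induced_rel S x y -> sadj x y.
Proof. by case/and3P. Qed.

Lemma conn_sub (X : sgraph) (S S' : {set X}) x y : S \subset S' ->
  connect (induced_rel S) x y -> connect (induced_rel S') x y.
Proof.
move=> sub; apply: (connect_map (f := id)) => u w /and3P [h1 h2 h3]; right.
by rewrite /induced_rel h1 (subsetP sub _ h2) (subsetP sub _ h3).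
Qed.

Definition Jv (G H : sgraph) (j : G -> H) := {a : H | a \in codom j}.

Section Jdef.
Variables (G H : sgraph) (j : G -> H).
Definition Jrel : rel (Jv j) := fun a b =>
  (val a != val b) && [exists v, exists w, [&& sadj v w, j v == val a & j w == val b]].
Lemma Jsym : symmetric Jrel.
Proof.
move=> a b; rewrite /Jrel eq_sym; congr (_ && _).
apply/existsP/existsP => [] [v /existsP [w /and3P [e1 e2 e3]]];
  exists w; apply/existsP; exists v; by rewrite sadj_sym e1 e2 e3.
Qed.
Lemma Jirr : irreflexive Jrel.
Proof. by move=> a; rewrite /Jrel eqxx. Qed.
Definition Jg : sgraph := SGraph Jsym Jirr.
End Jdef.

Section Main.
Variables (r t k l : nat) (H L G : sgraph).
Local Notation P := (sprod (sprod H L) (Kn l)).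
Variables (T : sgraph) (B : T -> {set H}).
Hypothesis Ttree : is_tree T.
Hypothesis Bcov : forall v : H, exists x : T, v \in B x.
Hypothesis Bedge : forall u v : H, sadj u v -> exists x : T, (u \in B x) && (v \in B x).
Hypothesis Bconn : forall v : H, connected_set [set x : T | v \in B x].
Hypothesis Bsize : forall x : T, #|B x| <= t.+1.
Hypothesis hdeg : maxdeg_le (gpower L r) k.
Variable mu : G -> {set P}.
Hypothesis mmodel : is_model mu.
Hypothesis mcen : forall v, exists2 c, c \in mu v &
  forall x, x \in mu v -> walkle (induced_rel (mu v)) r c x.

Lemma Tconn : forall x y : T, connect (@sadj T) x y.
Proof.
move=> x y; case: Ttree => [[_ h] _]; have := h x y; rewrite !inE => /(_ isT isT).
by apply: (connect_map (f := id)) => u w /and3P [e _ _]; right.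
Qed.

Lemma Tacyc : acyclic T. Proof. by case: Ttree. Qed.

Lemma ex_rho : exists x : T, true.
Proof. by case: Ttree => [[/set0Pn [x _] _] _]; exists x. Qed.

Definition rho : T := xchoose ex_rho.

Local Notation key := (key Tconn rho B).
Local Notation up := (up Tconn rho).

Definition cenP v (c : P) :=
  (c \in mu v) && [forall x, (x \in mu v) ==> walkle (induced_rel (mu v)) r c x].

Lemma ex_cen v : exists c, cenP v c.
Proof.
have [c cin cw] := mcen v; exists c; rewrite /cenP cin /=.
by apply/forallP => x; apply/implyP; apply: cw.
Qed.

Definition cen v := xchoose (ex_cen v).

Lemma cen_in v : cen v \in mu v.
Proof. by have := xchooseP (ex_cen v); case/andP. Qed.

Lemma cen_walk v x : x \in mu v -> walkle (induced_rel (mu v)) r (cen v) x.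
Proof.
by have := xchooseP (ex_cen v); case/andP => _ /forallP h; move/implyP: (h x).
Qed.

Definition hp (p : P) : H := p.1.1.
Definition lp (p : P) : L := p.1.2.

Definition Sv v : {set H} := [set hp p | p in mu v].

Lemma cen_Sv v : hp (cen v) \in Sv v.
Proof. by apply/imsetP; exists (cen v); rewrite ?cen_in. Qed.

Definition jv v : H := [arg min_(h < hp (cen v) in Sv v) key h].

Lemma jv_spec v : jv v \in Sv v /\ forall h, h \in Sv v -> key (jv v) <= key h.
Proof. by rewrite /jv; case: arg_minnP => //; apply: cen_Sv. Qed.

Lemma jv_in v : jv v \in Sv v. Proof. by case: (jv_spec v). Qed.
Lemma jv_min v h : h \in Sv v -> key (jv v) <= key h.
Proof. by case: (jv_spec v) => _; apply. Qed.

Lemma mu_walk2 v p q : p \in mu v -> q \in mu v ->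
  walkle (induced_rel (mu v)) (r + r) p q.
Proof.
move=> pin qin; apply: walkle_cat (cen_walk qin).
exact: walkle_sym (@induced_sym _ _) _ _ _ (cen_walk pin).
Qed.

Lemma proj_edge (p q : P) : sadj p q ->
  (hp p = hp q \/ sadj (hp p) (hp q)) /\ (lp p = lp q \/ sadj (lp p) (lp q)).
Proof.
move=> /sprod_proj [[E|e] _].
  by rewrite /hp /lp E; split; left.
by have [h1 h2] := sprod_proj e; split.
Qed.

Lemma walk_lp m p q : walkle (@sadj P) m p q -> walkle (@sadj L) m (lp p) (lp q).
Proof. by apply: walkle_map => x y /proj_edge []. Qed.

Lemma Sv_conn v h1 h2 : h1 \in Sv v -> h2 \in Sv v ->
  connect (induced_rel (Sv v)) h1 h2.
Proof.
case/imsetP => p pin -> /imsetP [q qin ->].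
case: mmodel => hc _ _; have [_ cc] := hc v.
apply: (connect_map (f := hp)) (cc _ _ pin qin) => x y /and3P [e xin yin].
case: (proj_edge e) => [[E|e2] _]; [by left | right].
by rewrite /induced_rel e2 /Sv !imset_f.
Qed.

Definition Jgr := Jg jv.

Definition Bp (x : T) : {set Jgr} :=
  [set a : Jgr | [exists v, (jv v == val a) && [exists h in Sv v, h \in B x]]].

Lemma lift_conn (X : {set T}) (S : {set H}) h1 h2 x1 x2 :
  (forall h, h \in S -> forall x, h \in B x -> x \in X) ->
  connect (induced_rel S) h1 h2 -> h1 \in S -> h1 \in B x1 -> h2 \in B x2 ->
  connect (induced_rel X) x1 x2.
Proof.
move=> hX /connectP [p pp ->] {h2}.
elim: p h1 x1 pp => [|h' p IH] h1 x1 /= pp h1S h1x hl.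
  have [_ c] := Bconn h1; have := c x1 x2; rewrite !inE => /(_ h1x hl) cn.
  by apply: conn_sub cn; apply/subsetP => x; rewrite inE; exact: hX h1S x.
case/andP: pp => /and3P [e _ h'S] pp.
have [x' /andP [h1x' h'x']] := Bedge e.
apply: connect_trans (IH h' x' pp h'S h'x' hl).
have [_ c] := Bconn h1; have := c x1 x'; rewrite !inE => /(_ h1x h1x') cn.
by apply: conn_sub cn; apply/subsetP => x; rewrite inE; exact: hX h1S x.
Qed.

Lemma Bp_cover (a : Jgr) : exists x, a \in Bp x.
Proof.
case: a => a ha; have [v Ev] := codomP ha; have [x hx] := Bcov (jv v).
exists x; rewrite inE; apply/existsP; exists v; rewrite /= Ev eqxx /=.
by apply/existsP; exists (jv v); rewrite jv_in hx.
Qed.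

Lemma Bp_edge (a b : Jgr) : sadj a b -> exists x, (a \in Bp x) && (b \in Bp x).
Proof.
case/andP => _ /existsP [v /existsP [w /and3P [e ea eb]]].
case: mmodel => _ _ /(_ v w e) [p [q [pin qin epq]]].
have [x /andP [px qx]] : exists x, (hp p \in B x) && (hp q \in B x).
  case: (proj_edge epq) => [[E|e2] _]; last exact: Bedge.
  by have [x hx] := Bcov (hp p); exists x; rewrite -E hx.
exists x; rewrite !inE; apply/andP; split; apply/existsP; [exists v|exists w];
  rewrite ?ea ?eb /=; apply/existsP; [exists (hp p)|exists (hp q)];
  by rewrite ?px ?qx /Sv imset_f.
Qed.

Lemma Bp_conn (a : Jgr) : connected_set [set x | a \in Bp x].
Proof.
split.
  by have [x hx] := Bp_cover a; apply/set0Pn; exists x; rewrite inE.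
have [z0 hz0] := Bcov (val a).
have toz : forall x, x \in [set x | a \in Bp x] ->
    connect (induced_rel [set x | a \in Bp x]) x z0.
  move=> x; rewrite !inE => /existsP [v /andP [/eqP ev /existsP [h /andP [hS hx]]]].
  apply: (lift_conn (S := Sv v) (h1 := h) (h2 := jv v)) => //.
  - move=> h0 h0S x0 h0x; rewrite !inE; apply/existsP; exists v; rewrite ev eqxx /=.
    by apply/existsP; exists h0; rewrite h0S h0x.
  - exact: Sv_conn (jv_in v).
  - by rewrite ev.
move=> x y xin yin; apply: connect_trans (toz _ xin) _.
by rewrite (sym_connect_sym (@induced_sym _ _)); apply: toz.
Qed.

Lemma Bp_size x : #|Bp x| <= ('C(2 * r + 1 + t, t) - 1).+1.
Proof.
have -> : ('C(2 * r + 1 + t, t) - 1).+1 = 'C(2 * r + 1 + t, t).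
  by rewrite subn1 prednK // bin_gt0 leq_addl.
rewrite -(card_imset _ val_inj).
have sub : [set val a | a in Bp x] \subset D Tconn rho B 0 (r + r) (B x).
  apply/subsetP => _ /imsetP [a ain ->].
  move: ain; rewrite inE => /existsP [v /andP [/eqP ev /existsP [h /andP [hS hx]]]].
  rewrite inE; apply/existsP; exists h; rewrite hx /= -ev.
  apply: (shortcut Tacyc Bconn (jv_min hS)).
  case/imsetP: hS => p pin ->; have := jv_in v; case/imsetP => q qin Eq.
  suff : walkle (wrel Tconn rho B (jv v)) (r + r) (hp p) (hp q) by rewrite -Eq.
  have hw := mu_walk2 pin qin.
  apply: (walkle_map _ hw) => x0 y0 /and3P [e x0in y0in].
  case: (proj_edge e) => [[E|e2] _]; [by left | right].
  rewrite /wrel /plus; apply/and3P; split.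
  - apply/andP; split.
      by apply/negP => /eqP E; rewrite E sadj_irr in e2.
    by have [z hz] := Bedge e2; apply/existsP; exists z.
  - by apply: jv_min; rewrite /Sv imset_f.
  - by apply: jv_min; rewrite /Sv imset_f.
apply: leq_trans (subset_leq_card sub) _.
apply: leq_trans (ML Tacyc Bconn (r + r) (b := t.+1) (th := 0) (p := x) (K := B x) _ _) _.
- by move=> i; apply: leq_trans (subset_leq_card (subsetIl _ _)) (Bsize _).
- by apply/subsetP => h hx; rewrite !inE hx.
apply: leq_trans (Fb_mono _ _ (Bsize x)) _.
by rewrite Fb_full; have -> : 2 * r + 1 + t = r + r + t.+1 by lia.
Qed.

Lemma J_tw : tw_le Jgr ('C(2 * r + 1 + t, t) - 1).
Proof.
exists T, Bp; split => //.
- exact: Bp_cover.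
- exact: Bp_edge.
- exact: Bp_conn.
- exact: Bp_size.
Qed.

Definition xv v : L := lp (cen v).

Definition Fi v : {set G} := [set w | (jv w == jv v) && (xv w == xv v)].

Lemma ex_q w : exists q : P, (q \in mu w) && (hp q == jv w).
Proof. by have := jv_in w; case/imsetP => q qin E; exists q; rewrite qin E eqxx. Qed.

Definition qpt w := xchoose (ex_q w).

Lemma qpt_in w : qpt w \in mu w.
Proof. by have := xchooseP (ex_q w); case/andP. Qed.

Lemma qpt_hp w : hp (qpt w) = jv w.
Proof. by have := xchooseP (ex_q w); case/andP => _ /eqP. Qed.

Lemma qpt_inj : injective qpt.
Proof.
move=> v w E; apply/eqP; apply/negPn/negP => nvw.
case: mmodel => _ /(_ v w nvw) dj _.
by have := disjointFr dj (qpt_in v); rewrite E qpt_in.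
Qed.

Lemma Fi_card v : #|Fi v| <= l * (k + 1).
Proof.
pose g w := (lp (qpt w), (qpt w).2).
have ginj : {in Fi v &, injective g}.
  move=> w1 w2; rewrite !inE => /andP [/eqP j1 _] /andP [/eqP j2 _] E.
  apply: qpt_inj; move: E (qpt_hp w1) (qpt_hp w2); rewrite /g /lp /hp j1 j2.
  by case: (qpt w1) => [[a1 b1] c1]; case: (qpt w2) => [[a2 b2] c2] /= [-> ->] -> ->.
rewrite -(card_in_imset ginj).
pose Nr := [set y : L | walkle (@sadj L) r (xv v) y].
have sub : [set g w | w in Fi v] \subset setX Nr [set: 'I_l].
  apply/subsetP => _ /imsetP [w win ->]; rewrite !inE andbT.
  move: win; rewrite inE => /andP [_ /eqP <-].
  apply: walk_lp; apply: walkle_sub (cen_walk (qpt_in w)) => x y; exact: induced_sub.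
apply: leq_trans (subset_leq_card sub) _.
rewrite cardsX cardsT card_ord mulnC leq_mul2l; apply/orP; right.
have sub2 : Nr \subset xv v |: [set u | sadj (s := gpower L r) (xv v) u].
  apply/subsetP => u; rewrite !inE => hu; case: (eqVneq u (xv v)) => //= nu.
  by rewrite /gpower_rel eq_sym nu.
apply: leq_trans (subset_leq_card sub2) _.
by rewrite addn1; apply: leq_trans (leq_card_setU _ _) _; rewrite cards1 add1n ltnS; apply: hdeg.
Qed.

Lemma idx_lt v : index v (enum (Fi v)) < l * (k + 1).
Proof.
apply: leq_trans (Fi_card v); rewrite cardE index_mem mem_enum inE !eqxx.
by [].
Qed.

Definition Target := sprod (sprod Jgr (gpower L (2 * r + 1))) (Kn (l * (k + 1))).

Definition Jpt v : Jgr := exist _ (jv v) (codom_f jv v).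

Definition fe v : Target := ((Jpt v, xv v), Ordinal (idx_lt v)).

Lemma fe_inj : injective fe.
Proof.
move=> v w E.
have Ej : jv v = jv w by move: (congr1 (fun z : Target => val z.1.1) E).
have Ex : xv v = xv w by move: (congr1 (fun z : Target => z.1.2) E).
have Ei : index v (enum (Fi v)) = index w (enum (Fi w)).
  by move: (congr1 (fun z : Target => nat_of_ord z.2) E).
have EF : Fi v = Fi w by apply/setP => u; rewrite !inE Ej Ex.
rewrite -EF in Ei.
have vin : v \in enum (Fi v) by rewrite mem_enum inE !eqxx.
have win : w \in enum (Fi v) by rewrite mem_enum inE Ej Ex !eqxx.
by rewrite -(nth_index v vin) Ei (nth_index v win).
Qed.

Lemma fe_adj v w : sadj v w -> sadj (fe v) (fe w).
Proof.
move=> e.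
have nvw : v != w by apply/negP => /eqP E; rewrite E sadj_irr in e.
have nf : fe v != fe w by apply/negP => /eqP /fe_inj E; rewrite E eqxx in nvw.
apply: sprod_adj => //; last first.
  by case: (eqVneq (fe v).2 (fe w).2) => [E|ne]; [left | right].
case: (eqVneq (fe v).1 (fe w).1) => [E|ne]; [by left | right].
apply: sprod_adj => //.
- case: (eqVneq (jv v) (jv w)) => [E|nj]; [left | right].
    by apply: val_inj.
  apply/andP; split => //; apply/existsP; exists v; apply/existsP; exists w.
  by rewrite e !eqxx.
- case: (eqVneq (xv v) (xv w)) => [E|nx]; [by left | right].
  rewrite /= /gpower_rel nx /=.
  case: mmodel => _ _ /(_ v w e) [p [q [pin qin epq]]].
  have w1 : walkle (@sadj P) r (cen v) p.
    by apply: walkle_sub (cen_walk pin) => x y; exact: induced_sub.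
  have w3 : walkle (@sadj P) r q (cen w).
    apply: (walkle_sym (@sadj_sym P)).
    by apply: walkle_sub (cen_walk qin) => x y; exact: induced_sub.
  have w2 : walkle (@sadj P) 1 p q := walkle_snoc (m := 0) (eqxx p) epq.
  have := walk_lp (walkle_cat w1 (walkle_cat w2 w3)).
  by have -> : r + (1 + r) = 2 * r + 1 by lia.
Qed.

Lemma G_contained : contained G Target.
Proof. by exists fe; split; [exact: fe_inj | exact: fe_adj]. Qed.

End Main.

Theorem theorem7 (r t k l : nat) (H L G : sgraph) :
  0 < l ->
  tw_le H t ->
  maxdeg_le (gpower L r) k ->
  shallow_minor r G (sprod (sprod H L) (Kn l)) ->
  exists J : sgraph,
    tw_le J ('C(2 * r + 1 + t, t) - 1) /\
    contained G (sprod (sprod J (gpower L (2 * r + 1))) (Kn (l * (k + 1)))).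
Proof.
move=> lpos [T [B [Ttree Bcov Bedge Bconn Bsize]]] hdeg [mu [mmodel mcen]].
have h1 := J_tw Ttree Bcov Bedge Bconn Bsize mmodel mcen.
have h2 := G_contained B Ttree hdeg mmodel mcen.
by eexists; split; [exact: h1 | exact: h2].
Qed.
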